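(* Let $Q\subset S^d$ be affinely independent, and let $S(C,R)$ be its touching sphere. Then $Q$ is nearly positively spanning if and only if $C\in\mathrm{conv}\,Q$. In this case $\mathrm{def}\,Q=\sqrt{1-R^2}$.
   Context: $S^d$ is the unit sphere in $\mathbb{R}^{d+1}$, $O$ is the origin, and $S(C,R)=\{x\in\mathbb{R}^{d+1}:\|x-C\|=R\}$. The touching sphere of an affinely independent set $Q$ is the unique sphere $S(C,R)$ with $C\in\mathrm{aff}\,Q$ and $Q\subset S(C,R)$. The set $Q$ is nearly positively spanning if it is affinely independent and the orthogonal projection $O'$ of $O$ onto $\mathrm{aff}\,Q$ lies in $\mathrm{conv}\,Q$. Its deficiency is then $\mathrm{def}\,Q=\|O'\|$. *)

(* Defs.v *)
From HB Require Import structures.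
From mathcomp Require Import all_boot all_order all_algebra.
Set Implicit Arguments. Unset Strict Implicit. Unset Printing Implicit Defensive.
Import Order.TTheory GRing.Theory Num.Theory.
Local Open Scope ring_scope.

Section Defs.
Variables (R : rcfType) (n k : nat).
Implicit Types (u v x : 'rV[R]_n) (q : 'I_k -> 'rV[R]_n).

Definition dotv u v : R := \sum_(i < n) u 0 i * v 0 i.
Definition normv u : R := Num.sqrt (dotv u u).

Definition aff_indep q : Prop :=
  forall l : 'I_k -> R, \sum_(i < k) l i = 0 ->
    \sum_(i < k) l i *: q i = 0 -> forall i, l i = 0.

Definition in_aff q x : Prop :=
  exists l : 'I_k -> R, \sum_(i < k) l i = 1 /\ x = \sum_(i < k) l i *: q i.
Definition in_conv q x : Prop :=
  exists l : 'I_k -> R, (forall i, 0 <= l i) /\ \sum_(i < k) l i = 1 /\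
    x = \sum_(i < k) l i *: q i.

Definition is_proj_origin q x : Prop :=
  in_aff q x /\ forall i j, dotv x (q i - q j) = 0.

Definition touching_sphere q (C : 'rV[R]_n) (r : R) : Prop :=
  in_aff q C /\ forall i, normv (q i - C) = r.

Definition nearly_pos_spanning q : Prop :=
  aff_indep q /\ exists x, is_proj_origin q x /\ in_conv q x.

End Defs.

(* Main.v *)
Require Import Defs.
From mathcomp Require Import all_boot all_order all_algebra.
From mathcomp Require Import lra.
Import Order.TTheory GRing.Theory Num.Theory.
Local Open Scope ring_scope.

Set Implicit Arguments.
Section H.
Context {R : rcfType} {n : nat}.
Implicit Types (u v w x : 'rV[R]_n).

Lemma dotvC u v : dotv u v = dotv v u.
Proof. by rewrite /dotv; apply: eq_bigr => i _; rewrite mulrC. Qed.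
Lemma dotvDl u v w : dotv (u + v) w = dotv u w + dotv v w.
Proof. by rewrite /dotv -big_split; apply: eq_bigr => i _; rewrite mxE mulrDl. Qed.
Lemma dotvNl u w : dotv (- u) w = - dotv u w.
Proof. by rewrite /dotv -sumrN; apply: eq_bigr => i _; rewrite mxE mulNr. Qed.
Lemma dotvZl a u w : dotv (a *: u) w = a * dotv u w.
Proof. by rewrite /dotv mulr_sumr; apply: eq_bigr => i _; rewrite mxE mulrA. Qed.
Lemma dotv0l w : dotv 0 w = 0.
Proof. by rewrite /dotv big1 // => i _; rewrite mxE mul0r. Qed.
Lemma dotvBl u v w : dotv (u - v) w = dotv u w - dotv v w.
Proof. by rewrite dotvDl dotvNl. Qed.
Lemma dotvBr u v w : dotv w (u - v) = dotv w u - dotv w v.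
Proof. by rewrite dotvC dotvBl (dotvC u) (dotvC v). Qed.
Lemma dotv_suml m (l : 'I_m -> R) (q : 'I_m -> 'rV[R]_n) w :
  dotv (\sum_(i < m) l i *: q i) w = \sum_(i < m) l i * dotv (q i) w.
Proof.
rewrite (big_morph (fun u => dotv u w) (fun u v => dotvDl u v w) (dotv0l w)).
by apply: eq_bigr => i _; rewrite dotvZl.
Qed.
Lemma dotv_ge0 u : 0 <= dotv u u.
Proof. by apply: sumr_ge0 => i _; rewrite -expr2 sqr_ge0. Qed.
Lemma dotv_eq0 u : dotv u u = 0 -> u = 0.
Proof.
move=> H; apply/rowP => j; rewrite mxE.
have h0 : forall i, xpredT i -> 0 <= u 0 i * u 0 i.
  by move=> i _; rewrite -expr2 sqr_ge0.
have /eqP := @psumr_eq0P _ _ xpredT (fun i => u 0 i * u 0 i) h0 H j isT.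
by rewrite mulf_eq0 orbb => /eqP.
Qed.
Lemma normv_sq u : normv u ^+ 2 = dotv u u.
Proof. by rewrite /normv sqr_sqrtr // dotv_ge0. Qed.

Lemma aff_const {k} {q : 'I_k -> 'rV[R]_n} {x y} {i0} :
  (forall i, dotv x (q i) = dotv x (q i0)) -> in_aff q y ->
  dotv x y = dotv x (q i0).
Proof.
move=> Hc [m [Hm ->]]; rewrite dotvC dotv_suml.
under eq_bigr => i _ do rewrite dotvC Hc.
by rewrite -mulr_suml Hm mul1r.
Qed.
End H.
Unset Implicit Arguments.

Theorem proposition2p5 (R : rcfType) (d k : nat) (q : 'I_k -> 'rV[R]_(d.+1))
    (C : 'rV[R]_(d.+1)) (r : R) :
  (forall i, normv (q i) = 1) ->
  aff_indep q ->
  touching_sphere q C r ->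
  (nearly_pos_spanning q <-> in_conv q C) /\
  (nearly_pos_spanning q ->
     forall x, is_proj_origin q x -> normv x = Num.sqrt (1 - r ^+ 2)).
Proof.
move=> Hn Hind [HaffC Hr].
have Hq i : dotv (q i) (q i) = 1 by rewrite -normv_sq Hn expr1n.
have Hr2 i : dotv (q i - C) (q i - C) = r ^+ 2 by rewrite -normv_sq Hr.
have key i : 2 * dotv C (q i) = 1 + dotv C C - r ^+ 2.
  have := Hr2 i; rewrite !dotvBl !dotvBr Hq (dotvC (q i) C) => <-.
  by rewrite mulr2n mulrDl !mul1r; lra.
have kpos : (0 < k)%N.
  rewrite lt0n; apply/negP => /eqP k0; move: HaffC => [l [Hl _]].
  move: l Hl; rewrite k0 => l; rewrite big_ord0 => /eqP; by rewrite eq_sym oner_eq0.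
pose i0 := Ordinal kpos.
have HcC i : dotv C (q i) = dotv C (q i0).
  by have := key i; have := key i0; lra.
have uniq x : is_proj_origin q x -> x = C.
  move=> [Hax Hx].
  have Hcx i : dotv x (q i) = dotv x (q i0).
    by have := Hx i i0; rewrite dotvBr; lra.
  have e1 := aff_const Hcx Hax; have e2 := aff_const Hcx HaffC.
  have e3 := aff_const HcC Hax; have e4 := aff_const HcC HaffC.
  have : dotv (x - C) (x - C) = 0.
    rewrite !dotvBl !dotvBr.
    lra.
  by move/dotv_eq0/eqP; rewrite subr_eq0 => /eqP.
have projC : is_proj_origin q C.
  split => // i j; rewrite dotvBr (HcC i) (HcC j); lra.
split.
  split; first by move=> [_ [x [/uniq -> ]]].
  by move=> HC; split => //; exists C.
move=> _ x /uniq ->; rewrite /normv; congr Num.sqrt.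
have := key i0; have := aff_const HcC HaffC; lra.
Qed.
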